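(* Let $0<\alpha<\beta<1$ and $t\geq1$. Let $\mathcal{P}_t'$ be the set of real polynomials $f$ of degree at most $t$ with $f(0)=0$ and $f(1)=1$. Suppose $f^\star\in\mathcal{P}_t'$ is a minimizer of \[ \frac{\max_{\lambda\in[0,\alpha]}|f(\lambda)|}{\min_{\lambda\in[\beta,1]}|f(\lambda)|} \] over $f\in\mathcal{P}_t'$. Then $f^\star$ has no roots in the interval $[\alpha,1]$.
   Context: The objective is taken to be $+\infty$ when the denominator vanishes. *)

(* Defs.v *)
From HB Require Import structures.
From mathcomp Require Import all_boot all_order all_algebra.
From mathcomp Require Import all_classical all_reals.
From mathcomp Require Import ereal.
Set Implicit Arguments. Unset Strict Implicit. Unset Printing Implicit Defensive.
Import Order.TTheory GRing.Theory Num.Theory.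
Local Open Scope ring_scope.
Local Open Scope classical_set_scope.

Definition Pt' (R : realType) (t : nat) (f : {poly R}) : Prop :=
  (size f <= t.+1)%N /\ f.[0] = 0 /\ f.[1] = 1.

(* max_{lambda in [a,b]} |f(lambda)| (a sup of a continuous function on a compact interval) *)
Definition maxabs (R : realType) (a b : R) (f : {poly R}) : R :=
  sup [set `|f.[x]| | x in [set x : R | a <= x <= b]].

Definition minabs (R : realType) (a b : R) (f : {poly R}) : R :=
  inf [set `|f.[x]| | x in [set x : R | a <= x <= b]].

Definition ratio_obj (R : realType) (alpha beta : R) (f : {poly R}) : \bar R :=
  if minabs beta 1 f == 0 then +oo%E
  else (maxabs 0 alpha f / minabs beta 1 f)%:E.

(* Main.v *)
Require Import Defs.
From HB Require Import structures.
From mathcomp Require Import all_boot all_order all_algebra.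
From mathcomp Require Import all_classical all_reals.
From mathcomp Require Import ereal.
From mathcomp Require Import ring lra.
Import Order.TTheory GRing.Theory Num.Theory.
Local Open Scope ring_scope.


Lemma maxabs_ub {R : realType} (a b x : R) (p : {poly R}) : 0 <= a -> b <= 1 -> a <= x <= b -> `|p.[x]| <= maxabs a b p.
Proof.
move=> a0 b1 hx; apply: sup_upper_bound; last by exists x.
split; first by exists `|p.[x]|; exists x.
have [ub hub] := poly_disk_bound p 1.
exists ub => y [z /andP[z1 z2] <-]; apply: hub.
rewrite ger0_norm; lra.
Qed.

Lemma maxabs_le {R : realType} (a b : R) (p : {poly R}) (B : R) : a <= b -> (forall x, a <= x <= b -> `|p.[x]| <= B) -> maxabs a b p <= B.
Proof.
move=> ab h; apply: ge_sup; first by exists `|p.[a]|; exists a => //=; apply/andP; split.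
by move=> y [z hz <-]; apply: h.
Qed.

Lemma minabs_lb {R : realType} (a b x : R) (p : {poly R}) : a <= x <= b -> minabs a b p <= `|p.[x]|.
Proof.
move=> hx; apply: ge_inf; last by exists x.
by exists 0 => y [z _ <-].
Qed.

Lemma minabs_ge {R : realType} (a b : R) (p : {poly R}) (B : R) : a <= b -> (forall x, a <= x <= b -> B <= `|p.[x]|) -> B <= minabs a b p.
Proof.
move=> ab h; apply: lb_le_inf; first by exists `|p.[a]|; exists a => //=; apply/andP; split.
by move=> y [z hz <-]; apply: h.
Qed.

Lemma zero_on {R : realType} (a : R) (p : {poly R}) : 0 < a -> (forall x, 0 <= x <= a -> p.[x] = 0) -> p = 0.
Proof.
move=> a0 h; apply/eqP; apply/negP => /negP hp.
suff: (size p < size p)%N by rewrite ltnn.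
rewrite -{1}(size_mkseq (fun i => a / (i.+1)%:R) (size p)).
apply: max_poly_roots => //.
  apply/allP => y /mapP [i _ ->]; apply/rootP/h.
  apply/andP; split; first by rewrite divr_ge0 ?ltW.
  rewrite ler_pdivrMr ?ltr0Sn // -[leLHS]mulr1 ler_pM2l // ler1n //.
have inj : injective (fun i : nat => a / (i.+1)%:R).
  move=> k l /(mulfI (negbT (gt_eqF a0))) /invr_inj /eqP; rewrite eqr_nat => /eqP [] //.
exact: mkseq_uniq.
Qed.

Theorem lemma2 {R : realType} (alpha beta : R) (t : nat) (fstar : {poly R}) :
  0 < alpha -> alpha < beta -> beta < 1 -> (1 <= t)%N ->
  Pt' t fstar ->
  (forall g : {poly R}, Pt' t g -> (ratio_obj alpha beta fstar <= ratio_obj alpha beta g)%E) ->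
  forall x : R, alpha <= x <= 1 -> fstar.[x] != 0.
Proof.
move=> a0 ab b1 t1 [hs [h0 h1]] hmin x /andP[ax x1].
have PX : Pt' t ('X : {poly R}).
  by split; [rewrite size_polyX | split; rewrite hornerX].
have mX : minabs beta 1 ('X : {poly R}) != 0.
  have : beta <= minabs beta 1 ('X : {poly R}).
    apply: minabs_ge; first lra.
    move=> y /andP[y1 y2]; rewrite hornerX ger0_norm; lra.
  move=> hb; apply/eqP => e; rewrite e in hb; lra.
set mf := minabs beta 1 fstar.
have mf0 : mf != 0.
  apply/negP => /eqP e; have := hmin _ PX.
  by rewrite /ratio_obj -/mf e eqxx (negbTE mX).
have mfge : 0 <= mf by apply: minabs_ge => [|y _]; [lra|].
have mfpos : 0 < mf by rewrite lt_def mf0.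
apply/negP => /eqP fx0.
have [bx | xb] := leP beta x.
  have : mf <= `|fstar.[x]| by apply: minabs_lb; rewrite bx x1.
  rewrite fx0 normr0 => hh; lra.
have /factor_theorem [q ef] : root fstar x by apply/rootP.
set Mf := maxabs 0 alpha fstar.
have f0 : fstar != 0 by apply/eqP => e; move: h1; rewrite e horner0 => /eqP; rewrite eq_sym oner_eq0.
have q0 : q != 0 by apply/eqP => e; move: f0; rewrite ef e mul0r eqxx.
have Mfge : forall y, 0 <= y <= alpha -> `|fstar.[y]| <= Mf.
  by move=> y hy; apply: maxabs_ub => //; lra.
have Mfpos : 0 < Mf.
  rewrite lt_def; apply/andP; split; last first.
    by apply: le_trans (Mfge 0 _); rewrite ?normr_ge0 // lexx ltW.
  apply/eqP => e; move/eqP: f0; apply; apply: (@zero_on _ alpha _ a0) => y hy.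
  by apply/normr0_eq0/eqP; rewrite eq_le normr_ge0 andbT -e Mfge.
have qz : q.[0] = 0.
  move: h0; rewrite ef hornerM hornerXsubC => /eqP; rewrite mulf_eq0 => /orP[/eqP //|].
  rewrite sub0r oppr_eq0 => /eqP e; lra.
have [ub hub] := poly_disk_bound q 1.
set K := `|ub| + 1.
have Kpos : 0 < K by rewrite /K; have := normr_ge0 ub; lra.
set eps := Mf / K.
have epspos : 0 < eps by rewrite divr_gt0.
set s := alpha - eps.
have s1 : 0 < 1 - s by rewrite /s; lra.
have sx : s < x by rewrite /s; lra.
set c := (1 - x) / (1 - s).
have cpos : 0 < c by rewrite divr_gt0 //; lra.
have c1 : c < 1 by rewrite /c ltr_pdivrMr // mul1r /s; lra.
set g := c *: (q * ('X - s%:P)).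
have Pg : Pt' t g.
  split; last split.
  - rewrite /g size_scale ?gt_eqF // size_mul ?polyXsubC_eq0 // size_XsubC.
    by move: hs; rewrite ef size_mul ?polyXsubC_eq0 // size_XsubC.
  - by rewrite /g hornerZ hornerM qz !mul0r mulr0.
  - move: h1; rewrite ef hornerM hornerXsubC => h1'.
    rewrite /g hornerZ hornerM hornerXsubC /c -[RHS]h1'.
    field; rewrite gt_eqF //.
have gE : forall y, `|g.[y]| = c * (`|q.[y]| * `|y - s|).
  by move=> y; rewrite /g hornerZ hornerM hornerXsubC normrM (ger0_norm (ltW cpos)) normrM.
have fE : forall y, `|fstar.[y]| = `|q.[y]| * `|y - x|.
  by move=> y; rewrite ef hornerM hornerXsubC normrM.
set mg := minabs beta 1 g.
have mgge : mf <= mg.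
  apply: minabs_ge; first lra.
  move=> y /andP[y1 y2]; apply: (le_trans (minabs_lb beta 1 y fstar _)); first by rewrite y1 y2.
  rewrite fE gE mulrA (mulrC c) -mulrA ler_wpM2l //.
  have key : (y - x) * (1 - s) <= (1 - x) * (y - s) by rewrite /s; nra.
  rewrite !ger0_norm /c; try (rewrite /s; lra).
  by rewrite mulrAC ler_pdivlMr.
have mg0 : mg != 0 by rewrite gt_eqF //; lra.
set Mg := maxabs 0 alpha g.
have Mgle : Mg <= c * Mf.
  apply: maxabs_le; first lra.
  move=> y /andP[y0 ya]; rewrite gE ler_pM2l //.
  have [ys | sy] := leP y s.
    apply: (le_trans _ (Mfge y _)); last by rewrite y0 ya.
    rewrite fE ler_wpM2l // !ler0_norm; lra.
  have hq : `|q.[y]| <= K by rewrite /K; apply: (le_trans (hub y _)); [rewrite ger0_norm; lra | have := ler_norm ub; lra].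
  have hy : `|y - s| <= eps by rewrite ger0_norm; have : s = alpha - eps by []; lra.
  have -> : Mf = K * eps by rewrite /eps mulrC divfK ?gt_eqF.
  apply: ler_pM => //.

have := hmin _ Pg; rewrite /ratio_obj -/mf -/mg -/Mf -/Mg (negbTE mf0) (negbTE mg0) lee_fin.
set u := Mf / mf.
have upos : 0 < u by rewrite divr_gt0.
have Mgge : 0 <= Mg by apply: (le_trans (normr_ge0 g.[0])); apply: maxabs_ub; lra.
have h2 : Mg / mg <= Mg / mf by rewrite ler_wpM2l // lef_pV2 ?posrE //; lra.
have h3 : Mg / mf <= c * u by rewrite /u mulrA ler_pM2r ?invr_gt0.
move=> h4; have : u <= c * u by lra.
nra.
Qed.
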